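(* If $(g(z),f(z))$ is a Riordan matrix that is a pseudo-involution, then for every positive integer $n$ the Riordan matrix $(g(z)^n, f(z))$ is also a pseudo-involution.
   Context: A Riordan matrix is a pair $(g(z),f(z))$ of formal power series over $\mathbb{C}$ with $g(z)=\sum_{n\ge 0} g_n z^n$, $g_0\neq 0$, and $f(z)=\sum_{n\ge 1} f_n z^n$ with $f_1\neq 0$; it represents the infinite lower-triangular matrix whose $k$-th column ($k\ge 0$) has generating function $g(z)f(z)^k$. Riordan matrices form a group under matrix multiplication, where $(g(z),f(z))*(h(z),l(z))=(g(z)h(f(z)),\,l(f(z)))$ and the identity is $(1,z)$. Let $M=(1,-z)$. A Riordan matrix $L$ is called a pseudo-involution if $(L*M)*(L*M)=(1,z)$. *)

(* Defs.v *)
From HB Require Import structures.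
From mathcomp Require Import all_boot all_order all_algebra.
From mathcomp Require Import complex.
From mathcomp Require Import Rstruct.
Set Implicit Arguments. Unset Strict Implicit. Unset Printing Implicit Defensive.
Import Order.TTheory GRing.Theory Num.Theory.
Local Open Scope ring_scope.

Definition C : Type := complex Rdefinitions.R.

Definition fps := nat -> C.

Definition fps_one : fps := fun n => if n == 0%N then 1 else 0.
Definition fps_X : fps := fun n => if n == 1%N then 1 else 0.
Definition fps_negX : fps := fun n => if n == 1%N then -1 else 0.

Definition fps_mul (a b : fps) : fps :=
  fun n => \sum_(i < n.+1) a i * b (n - i)%N.

Fixpoint fps_pow (a : fps) (k : nat) : fps :=
  match k with
  | 0%N => fps_one
  | k'.+1 => fps_mul a (fps_pow a k')
  end.

(* composition a(f(z)), meaningful when f has zero constant term; then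
   [z^n] f^k = 0 for k > n, so the sum below is the full coefficient. *)
Definition fps_comp (a f : fps) : fps :=
  fun n => \sum_(k < n.+1) a k * fps_pow f k n.

Definition is_riordan (g f : fps) : Prop :=
  g 0%N != 0 /\ f 0%N = 0 /\ f 1%N != 0.

Definition riordan_mul (L1 L2 : fps * fps) : fps * fps :=
  (fps_mul L1.1 (fps_comp L2.1 L1.2), fps_comp L2.2 L1.2).

Definition riordan_id : fps * fps := (fps_one, fps_X).
Definition riordan_M : fps * fps := (fps_one, fps_negX).

Definition pseudo_involution (L : fps * fps) : Prop :=
  let LM := riordan_mul L riordan_M in riordan_mul LM LM = riordan_id.

(* Main.v *)
Set Warnings "-notation-overridden,-ambiguous-paths".
Require Import Defs.
From mathcomp Require Import all_boot all_order all_algebra.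
From mathcomp Require Import zify complex Rstruct.
From Stdlib Require Import FunctionalExtensionality.
Local Open Scope ring_scope.
Import GRing.Theory.

Definition tr (N : nat) (a : fps) : {poly (complex Rdefinitions.R)} := \poly_(i < N) a i.
Definition eqN (N : nat) (p q : {poly (complex Rdefinitions.R)}) := forall i, (i < N)%N -> p`_i = q`_i.

Lemma eqN_refl N p : eqN N p p. Proof. by []. Qed.
Lemma eqN_sym N p q : eqN N p q -> eqN N q p.
Proof. by move=> H i Hi; rewrite H. Qed.
Lemma eqN_trans N p q r : eqN N p q -> eqN N q r -> eqN N p r.
Proof. by move=> H1 H2 i Hi; rewrite H1 ?H2. Qed.

Lemma eqN_mul N p1 q1 p2 q2 : eqN N p1 q1 -> eqN N p2 q2 -> eqN N (p1 * p2) (q1 * q2).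
Proof.
move=> H1 H2 i Hi; rewrite !coefM; apply: eq_bigr => j _.
have Hj := ltn_ord j.
rewrite H1 ?H2 //; lia.
Qed.

Lemma eqN_exp N p q k : eqN N p q -> eqN N (p ^+ k) (q ^+ k).
Proof.
move=> H; elim: k => [|k IH]; first exact: eqN_refl.
by rewrite !exprS; apply: eqN_mul.
Qed.

Lemma tr_coef N a i : (i < N)%N -> (tr N a)`_i = a i.
Proof. by move=> Hi; rewrite /tr coef_poly Hi. Qed.

Lemma tr_mul N a b : eqN N (tr N (fps_mul a b)) (tr N a * tr N b).
Proof.
move=> i Hi; rewrite tr_coef // coefM /fps_mul; apply: eq_bigr => j _.
have Hj := ltn_ord j.
rewrite !tr_coef //; lia.
Qed.

Lemma tr_pow N a k : eqN N (tr N (fps_pow a k)) (tr N a ^+ k).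
Proof.
elim: k => [|k IH] i Hi.
  by rewrite tr_coef // coef1 /= /fps_one; case: (i == 0%N).
rewrite /= exprS tr_mul //; move: i Hi; apply: eqN_mul => //; exact: eqN_refl.
Qed.

Lemma coef_pow_low (P : {poly (complex Rdefinitions.R)}) k m : P`_0 = 0 -> (m < k)%N -> (P ^+ k)`_m = 0.
Proof.
move=> P0; elim: k m => [|k IH] m Hm //.
rewrite exprS coefM big1 // => j _.
have Hj := ltn_ord j.
case: (eqVneq (nat_of_ord j) 0%N) => [->|jn0]; first by rewrite P0 mul0r.
rewrite IH ?mulr0 //; lia.
Qed.

Lemma sum_ext_zero (F : nat -> C) K1 K2 :
  (forall i, (K1 <= i)%N -> F i = 0) -> (K1 <= K2)%N ->
  \sum_(i < K1) F i = \sum_(i < K2) F i.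
Proof.
move=> HF Hle.
rewrite -!(big_mkord xpredT) (big_cat_nat (leq0n K1) Hle) /=.
rewrite [X in _ + X]big_nat_cond [X in _ + X]big1 ?addr0 // => i /andP[/andP[Hi _] _].
exact: HF.
Qed.

Lemma comp_low (p P : {poly (complex Rdefinitions.R)}) m : P`_0 = 0 ->
  (p \Po P)`_m = \sum_(i < m.+1) p`_i * (P ^+ i)`_m.
Proof.
move=> P0; rewrite coef_comp_poly.
rewrite (@sum_ext_zero (fun i => p`_i * (P ^+ i)`_m) (size p) (size p + m.+1)).
- symmetry; apply: (@sum_ext_zero (fun i => p`_i * (P ^+ i)`_m)); last by rewrite leq_addl.
  by move=> i Hi; rewrite coef_pow_low ?mulr0.
- by move=> i Hi; rewrite nth_default ?mul0r.
- by rewrite leq_addr.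
Qed.

Lemma eqN_comp_l N (p q P : {poly (complex Rdefinitions.R)}) : P`_0 = 0 -> eqN N p q ->
  eqN N (p \Po P) (q \Po P).
Proof.
move=> P0 H i Hi; rewrite !comp_low //; apply: eq_bigr => j _.
have Hj := ltn_ord j.
rewrite H //; lia.
Qed.

Lemma eqN_comp_r N (p P Q : {poly (complex Rdefinitions.R)}) : eqN N P Q -> eqN N (p \Po P) (p \Po Q).
Proof.
move=> H i Hi; rewrite !coef_comp_poly; apply: eq_bigr => j _.
by rewrite (@eqN_exp N P Q j H i Hi).
Qed.

Lemma tr0 N a : (tr N a)`_0 = 0 \/ a 0%N = 0 -> True. Proof. by []. Qed.

Lemma tr_const0 N a : a 0%N = 0 -> (tr N a)`_0 = 0.
Proof. by move=> H; rewrite /tr coef_poly; case: ifP. Qed.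

Lemma tr_comp N a F : F 0%N = 0 ->
  eqN N (tr N (fps_comp a F)) (tr N a \Po tr N F).
Proof.
move=> F0 i Hi; rewrite tr_coef // comp_low ?tr_const0 // /fps_comp.
apply: eq_bigr => j _; have Hj := ltn_ord j.
rewrite tr_coef; last lia.
by rewrite -(@tr_pow N F j i Hi) tr_coef.
Qed.

Lemma tr_one N : eqN N (tr N fps_one) 1.
Proof. by move=> i Hi; rewrite tr_coef // coef1 /fps_one; case: (i == 0%N). Qed.

Lemma tr_negX N : eqN N (tr N fps_negX) (- 'X).
Proof.
by move=> i Hi; rewrite tr_coef // coefN coefX /fps_negX; case: (i == 1%N); rewrite ?oppr0.
Qed.

Lemma comp_exp (p q : {poly (complex Rdefinitions.R)}) k : (p ^+ k) \Po q = (p \Po q) ^+ k.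
Proof.
elim: k => [|k IH]; first by rewrite !expr0 comp_polyC.
by rewrite !exprS comp_polyM IH.
Qed.

Lemma pow0 a k : fps_pow a k 0%N = a 0%N ^+ k.
Proof.
elim: k => [|k IH] /=; first by rewrite expr0.
by rewrite /fps_mul big_ord1 subnn IH exprS.
Qed.

Lemma negF0 f : fps_comp fps_negX f 0%N = 0.
Proof. by rewrite /fps_comp big_ord1 /fps_negX /= mul0r. Qed.

Lemma first_comp N (h f : fps) : f 0%N = 0 ->
  eqN N (tr N (fps_mul (fps_mul h (fps_comp fps_one f))
           (fps_comp (fps_mul h (fps_comp fps_one f)) (fps_comp fps_negX f))))
        (tr N h * (tr N h \Po - tr N f)).
Proof.
move=> f0.
have HG : eqN N (tr N (fps_mul h (fps_comp fps_one f))) (tr N h).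
  eapply eqN_trans; [exact: (tr_mul N h (fps_comp fps_one f))|].
  rewrite -[X in eqN _ _ X]mulr1; apply: eqN_mul; first exact: eqN_refl.
  eapply eqN_trans; [exact: (tr_comp N _ f f0)|].
  eapply eqN_trans; [apply: (eqN_comp_l N _ _ _ (tr_const0 N f f0) (tr_one N))|].
  by rewrite comp_polyC; exact: eqN_refl.
have HF : eqN N (tr N (fps_comp fps_negX f)) (- tr N f).
  eapply eqN_trans; [exact: (tr_comp N _ f f0)|].
  eapply eqN_trans; [apply: (eqN_comp_l N _ _ _ (tr_const0 N f f0) (tr_negX N))|].
  by rewrite -[- 'X]sub0r comp_polyB comp_polyX -polyC0 comp_polyC polyC0 sub0r; exact: eqN_refl.
eapply eqN_trans; [exact: (tr_mul _ _ _)|].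
apply: eqN_mul => //.
eapply eqN_trans; [exact: (tr_comp N _ _ (negF0 f))|].
eapply eqN_trans; [apply: (eqN_comp_l N _ _ _ (tr_const0 N _ (negF0 f)) HG)|].
exact: eqN_comp_r.
Qed.

Theorem proposition24 (g f : fps) :
  is_riordan g f -> pseudo_involution (g, f) ->
  forall n : nat, (0 < n)%N ->
    is_riordan (fps_pow g n) f /\ pseudo_involution (fps_pow g n, f).
Proof.
move=> [g0 [f0 f1]] Hpi k k0; split.
  by split => //; rewrite pow0 expf_neq0.
move: Hpi; rewrite /pseudo_involution /riordan_mul /= => -[H1 H2].
apply: (f_equal2 pair) => //.
apply: functional_extensionality => n.
set N := n.+1.
have HnN : (n < N)%N by [].
have Hg : eqN N (tr N g * (tr N g \Po - tr N f)) 1.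
  eapply eqN_trans; [exact: (eqN_sym _ _ _ (first_comp N g f f0))|].
  by rewrite H1; exact: tr_one.
have Hf0 : (- tr N f)`_0 = 0 by rewrite coefN tr_const0 ?oppr0.
rewrite -(tr_coef N _ n HnN) (first_comp N _ f f0 n HnN).
rewrite -[fps_one n](tr_coef N _ n HnN) (tr_one N n HnN).
have E : eqN N (tr N (fps_pow g k) * (tr N (fps_pow g k) \Po - tr N f))
               ((tr N g * (tr N g \Po - tr N f)) ^+ k).
  rewrite exprMn -comp_exp.
  apply: eqN_mul; first exact: tr_pow.
  apply: eqN_comp_l => //; exact: tr_pow.
by rewrite (E n HnN) (eqN_exp N _ _ k Hg n HnN) expr1n.
Qed.
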